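(* Let $t$ be a closed term and suppose $t\to_w^h a_s$ with $a_s$ a strict answer. Then (1) $t\to_y^k a_s$ for some $k\in\mathbb{N}$; and (2) $h\leq k$.
   Context: Terms: $t ::= x \mid \lambda x.t \mid t\,u \mid t[x\backslash u]$ ($t[x\backslash u]$ an explicit substitution binding $x$ in $t$; terms up to $\alpha$). Values $v ::= \lambda x.t$. Substitution contexts $S ::= \langle\cdot\rangle\mid S[x\backslash u]$. Weak contexts $W ::= \langle\cdot\rangle \mid W\,t \mid t\,W \mid t[x\backslash W] \mid W[x\backslash u]$. For a class of contexts $K$, $K\langle\langle t\rangle\rangle$ is plugging without capture of free variables of $t$. Root rules: $S\langle\lambda x.t\rangle u\mapsto_m S\langle t[x\backslash u]\rangle$; $K\langle\langle x\rangle\rangle[x\backslash u]\mapsto_{e_K} K\langle\langle u\rangle\rangle[x\backslash u]$; $t[x\backslash S\langle v\rangle]\mapsto_{gcv} S\langle t\rangle$ if $x\notin\mathrm{fv}(t)$. $\to_w$ is the union of the closures under weak contexts of $\mapsto_m$, $\mapsto_{e_W}$ ($K$ = weak contexts), $\mapsto_{gcv}$; $\to^h$ denotes exactly $h$ steps. Call-by-silly strategy: answers $a ::= v\mid a[x\backslash a']$; name contexts $N ::= \langle\cdot\rangle\mid N t\mid N[x\backslash t]$; auxiliary contexts $A ::= \langle\cdot\rangle\mid a[x\backslash A]\mid A[x\backslash t]$; silly contexts $Y ::= A\langle N\rangle$; $\to_{ym} := Y\langle\mapsto_m\rangle$; $\to_{yeAY} := A\langle\mapsto_{e_Y}\rangle$;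 $\to_{yeYN} := Y\langle\mapsto_{e_N}\rangle$; $\to_{ygcv}:=Y\langle\mapsto_{gcv}\rangle$; $\to_y$ is their union. Strict answers: $a_s ::= v\mid a_s[x\backslash a_s']$ with $x\in\mathrm{fv}(a_s)$. *)

(* Defs.v *)
(* Terms of the linear-substitution-calculus style calculus
   with explicit substitutions, in de Bruijn representation (so terms are
   identified up to alpha-equivalence by construction). *)
From Stdlib Require Import Arith List.
Import ListNotations.

(* t ::= x | \x.t | t u | t[x\u] ;  in [ES t u] (= t[x\u]) index 0 of t
   is bound to the substitution; u is not under the binder. *)
Inductive term : Type :=
| Var : nat -> term
| Lam : term -> term
| App : term -> term -> term
| ES  : term -> term -> term.

Fixpoint lift (c k : nat) (t : term) : term :=
  match t with
  | Var n => Var (if Nat.leb c n then n + k else n)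
  | Lam b => Lam (lift (S c) k b)
  | App t1 t2 => App (lift c k t1) (lift c k t2)
  | ES t1 t2 => ES (lift (S c) k t1) (lift c k t2)
  end.

(* remove the (unused) index c: free indices > c are decremented *)
Fixpoint lower (c : nat) (t : term) : term :=
  match t with
  | Var n => Var (if Nat.ltb c n then pred n else n)
  | Lam b => Lam (lower (S c) b)
  | App t1 t2 => App (lower c t1) (lower c t2)
  | ES t1 t2 => ES (lower (S c) t1) (lower c t2)
  end.

Fixpoint occurs (n : nat) (t : term) : bool :=
  match t with
  | Var m => Nat.eqb n m
  | Lam b => occurs (S n) b
  | App t1 t2 => occurs n t1 || occurs n t2
  | ES t1 t2 => occurs (S n) t1 || occurs n t2
  end.

Fixpoint closed_at (n : nat) (t : term) : Prop :=
  match t with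
  | Var m => m < n
  | Lam b => closed_at (S n) b
  | App t1 t2 => closed_at n t1 /\ closed_at n t2
  | ES t1 t2 => closed_at (S n) t1 /\ closed_at n t2
  end.

Definition closed (t : term) : Prop := closed_at 0 t.

Definition is_value (t : term) : Prop := exists b, t = Lam b.

Inductive answer : term -> Prop :=
| ans_val : forall b, answer (Lam b)
| ans_es  : forall a a', answer a -> answer a' -> answer (ES a a').

Inductive strict_answer : term -> Prop :=
| sans_val : forall b, strict_answer (Lam b)
| sans_es  : forall a a', strict_answer a -> strict_answer a' ->
             occurs 0 a = true -> strict_answer (ES a a').

(* substitution contexts S ::= <> | S[x\u]; the list lists the u's,
   outermost first *)
Definition sctx := list term.
Fixpoint plugS (s : sctx) (t : term) : term :=
  match s with
  | [] => t
  | u :: s' => ES (plugS s' t) u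
  end.
(* number of binders crossed by the hole = length s *)

Inductive wctx : Type :=
| WHole : wctx
| WAppL : wctx -> term -> wctx
| WAppR : term -> wctx -> wctx
| WESArg : term -> wctx -> wctx
| WESBody : wctx -> term -> wctx.

Fixpoint plugW (W : wctx) (t : term) : term :=
  match W with
  | WHole => t
  | WAppL W' u => App (plugW W' t) u
  | WAppR u W' => App u (plugW W' t)
  | WESArg u W' => ES u (plugW W' t)
  | WESBody W' u => ES (plugW W' t) u
  end.

Fixpoint depthW (W : wctx) : nat :=
  match W with
  | WHole => 0
  | WAppL W' _ => depthW W'
  | WAppR _ W' => depthW W'
  | WESArg _ W' => depthW W'
  | WESBody W' _ => S (depthW W')
  end.

Inductive nctx : Type :=
| NHole : nctx
| NAppL : nctx -> term -> nctx
| NESBody : nctx -> term -> nctx.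

Fixpoint plugN (N : nctx) (t : term) : term :=
  match N with
  | NHole => t
  | NAppL N' u => App (plugN N' t) u
  | NESBody N' u => ES (plugN N' t) u
  end.

Fixpoint depthN (N : nctx) : nat :=
  match N with
  | NHole => 0
  | NAppL N' _ => depthN N'
  | NESBody N' _ => S (depthN N')
  end.

(* auxiliary contexts A ::= <> | a[x\A] | A[x\t] ; the side condition that
   the body in a[x\A] is an answer is imposed by [validA] *)
Inductive actx : Type :=
| AHole : actx
| AESArg : term -> actx -> actx
| AESBody : actx -> term -> actx.

Fixpoint validA (A : actx) : Prop :=
  match A with
  | AHole => True
  | AESArg a A' => answer a /\ validA A'
  | AESBody A' _ => validA A'
  end.

Fixpoint plugA (A : actx) (t : term) : term :=
  match A with
  | AHole => t
  | AESArg a A' => ES a (plugA A' t)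
  | AESBody A' u => ES (plugA A' t) u
  end.

Fixpoint depthA (A : actx) : nat :=
  match A with
  | AHole => 0
  | AESArg _ A' => depthA A'
  | AESBody A' _ => S (depthA A')
  end.

Definition plugY (A : actx) (N : nctx) (t : term) : term := plugA A (plugN N t).
Definition depthY (A : actx) (N : nctx) : nat := depthA A + depthN N.

(* S<\x.t> u  |->_m  S<t[x\u]>   (u lifted over the binders of S) *)
Inductive root_m : term -> term -> Prop :=
| RootM : forall s b u,
    root_m (App (plugS s (Lam b)) u) (plugS s (ES b (lift 0 (length s) u))).

Inductive root_gcv : term -> term -> Prop :=
| RootGcv : forall t s v, is_value v -> occurs 0 t = false ->
    root_gcv (ES t (plugS s v)) (plugS s (lift 0 (length s) (lower 0 t))).

(* K<<x>>[x\u] |->_{e_K} K<<u>>[x\u] : the occurrence of x at the hole is the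
   index [depth K] (it refers to the substitution, not captured by K), and u
   is plugged without capture, i.e. lifted by depth K + 1. *)
Inductive root_eW : term -> term -> Prop :=
| RootEW : forall K u,
    root_eW (ES (plugW K (Var (depthW K))) u)
            (ES (plugW K (lift 0 (S (depthW K)) u)) u).

Inductive root_eN : term -> term -> Prop :=
| RootEN : forall N u,
    root_eN (ES (plugN N (Var (depthN N))) u)
            (ES (plugN N (lift 0 (S (depthN N)) u)) u).

Inductive root_eY : term -> term -> Prop :=
| RootEY : forall A N u, validA A ->
    root_eY (ES (plugY A N (Var (depthY A N))) u)
            (ES (plugY A N (lift 0 (S (depthY A N)) u)) u).

Inductive w_root : term -> term -> Prop :=
| WRm : forall t u, root_m t u -> w_root t u
| WReW : forall t u, root_eW t u -> w_root t u
| WRgcv : forall t u, root_gcv t u -> w_root t u.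

Inductive w_step : term -> term -> Prop :=
| WStep : forall W r r', w_root r r' -> w_step (plugW W r) (plugW W r').

Inductive y_step : term -> term -> Prop :=
| Y_m : forall A N r r', validA A -> root_m r r' ->
    y_step (plugY A N r) (plugY A N r')
| Y_eAY : forall A r r', validA A -> root_eY r r' ->
    y_step (plugA A r) (plugA A r')
| Y_eYN : forall A N r r', validA A -> root_eN r r' ->
    y_step (plugY A N r) (plugY A N r')
| Y_gcv : forall A N r r', validA A -> root_gcv r r' ->
    y_step (plugY A N r) (plugY A N r').

Inductive nsteps (R : term -> term -> Prop) : nat -> term -> term -> Prop :=
| ns0 : forall t, nsteps R 0 t t
| nsS : forall n t u v, R t u -> nsteps R n u v -> nsteps R (S n) t v.

(* Main.v *)
Require Import Defs.
From Stdlib Require Import Arith Lia List Bool.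
Import ListNotations.

Definition up (f : nat -> nat) : nat -> nat :=
  fun n => match n with 0 => 0 | S m => S (f m) end.

Fixpoint ren (f : nat -> nat) (t : term) : term :=
  match t with
  | Var n => Var (f n)
  | Lam b => Lam (ren (up f) b)
  | App a b => App (ren f a) (ren f b)
  | ES a b => ES (ren (up f) a) (ren f b)
  end.

Lemma ren_ext_occ : forall t f g,
  (forall n, occurs n t = true -> f n = g n) -> ren f t = ren g t.
Proof.
  induction t; intros f g H; simpl in *.
  - f_equal. apply H. apply Nat.eqb_refl.
  - f_equal. apply IHt. intros [|n] Hn; simpl; auto.
  - f_equal; [apply IHt1|apply IHt2]; intros n Hn; apply H; rewrite Hn;
      auto with bool.
  - f_equal; [apply IHt1|apply IHt2].
    + intros [|n] Hn; simpl; auto. f_equal. apply H. rewrite Hn. auto.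
    + intros n Hn. apply H. rewrite Hn. auto with bool.
Qed.

Lemma ren_ext : forall t f g, (forall n, f n = g n) -> ren f t = ren g t.
Proof. intros. apply ren_ext_occ. auto. Qed.

Lemma ren_ren : forall t f g, ren f (ren g t) = ren (fun n => f (g n)) t.
Proof.
  induction t; intros f g; simpl; f_equal; auto;
  try (rewrite IHt; apply ren_ext; intros [|n]; reflexivity);
  try (rewrite IHt1; apply ren_ext; intros [|n]; reflexivity).
Qed.

Lemma ren_id : forall t f, (forall n, f n = n) -> ren f t = t.
Proof.
  induction t; intros f H; simpl; f_equal; auto;
  try (apply IHt); try (apply IHt1); intros [|n]; simpl; auto.
Qed.

Lemma occurs_ren : forall t i f,
  occurs i (ren f t) = true <-> exists j, occurs j t = true /\ f j = i.
Proof.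
  induction t; intros i f; simpl.
  - rewrite Nat.eqb_eq. split.
    + intros ->. exists n. rewrite Nat.eqb_refl. auto.
    + intros [j [Hj <-]]. apply Nat.eqb_eq in Hj. subst. auto.
  - rewrite IHt. split.
    + intros [[|j] [Hj E]]; simpl in E; try discriminate. injection E as E.
      exists j. auto.
    + intros [j [Hj E]]. exists (S j). simpl. rewrite E. auto.
  - rewrite orb_true_iff, IHt1, IHt2. split.
    + intros [[j [H1 H2]]|[j [H1 H2]]]; exists j; rewrite H1; auto with bool.
    + intros [j [H1 H2]]. apply orb_true_iff in H1 as [H1|H1]; [left|right];
      exists j; auto.
  - rewrite orb_true_iff, IHt1, IHt2. split.
    + intros [[[|j] [H1 H2]]|[j [H1 H2]]]; simpl in H2; try discriminate.
      * injection H2 as H2. exists j. rewrite H1. auto.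
      * exists j. rewrite H1. auto with bool.
    + intros [j [H1 H2]]. apply orb_true_iff in H1 as [H1|H1].
      * left. exists (S j). simpl. rewrite H2. auto.
      * right. exists j. auto.
Qed.

Lemma lift_ren : forall t c k,
  lift c k t = ren (fun n => if c <=? n then n + k else n) t.
Proof.
  induction t; intros c k; simpl; f_equal; auto;
  try (rewrite IHt; apply ren_ext; intros [|n]; simpl; auto;
       destruct (c <=? n); auto);
  try (rewrite IHt1; apply ren_ext; intros [|n]; simpl; auto;
       destruct (c <=? n); auto).
Qed.

Lemma lift0_ren : forall t k, lift 0 k t = ren (fun n => n + k) t.
Proof. intros. rewrite lift_ren. apply ren_ext. intros n. reflexivity. Qed.

Definition lowf (c : nat) : nat -> nat := fun n => if c <? n then pred n else n.

Lemma lower_ren : forall t c, lower c t = ren (lowf c) t.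
Proof.
  unfold lowf.
  induction t; intros c; simpl; f_equal; auto;
  try (rewrite IHt; apply ren_ext; intros [|n]; [reflexivity|];
       unfold up; destruct (Nat.ltb_spec (S c) (S n)), (Nat.ltb_spec c n); lia);
  try (rewrite IHt1; apply ren_ext; intros [|n]; [reflexivity|];
       unfold up; destruct (Nat.ltb_spec (S c) (S n)), (Nat.ltb_spec c n); lia).
Qed.

Definition upn (k : nat) (f : nat -> nat) : nat -> nat :=
  fun n => if n <? k then n else f (n - k) + k.

Fixpoint rens (f : nat -> nat) (s : list term) : list term :=
  match s with
  | [] => []
  | u :: s' => ren f u :: rens (up f) s'
  end.

Lemma rens_length : forall s f, length (rens f s) = length s.
Proof. induction s; intros; simpl; auto. Qed.

Lemma ren_plugS : forall s t f,
  ren f (plugS s t) = plugS (rens f s) (ren (upn (length s) f) t).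
Proof.
  induction s; intros t f; simpl.
  - apply ren_ext. intros n. unfold upn. simpl.
    rewrite Nat.sub_0_r, Nat.add_0_r. reflexivity.
  - f_equal. rewrite IHs. f_equal. apply ren_ext. intros n. unfold upn, up.
    destruct (Nat.ltb_spec n (length s)); destruct (Nat.ltb_spec n (S (length s)));
      try lia.
    all: destruct (n - length s) as [|m] eqn:E; try lia.
    replace (n - S (length s)) with m by lia. lia.
Qed.

Lemma plugS_app : forall s1 s2 t, plugS (s1 ++ s2) t = plugS s1 (plugS s2 t).
Proof. induction s1; intros; simpl; f_equal; auto. Qed.

Lemma up_lift1 : forall x f, ren (up f) (lift 0 1 x) = lift 0 1 (ren f x).
Proof.
  intros. rewrite !lift0_ren, !ren_ren. apply ren_ext. intros n.
  unfold up. replace (n+1) with (S n) by lia. lia.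
Qed.

Lemma ren_lift0 : forall x f k, ren f (lift 0 k x) = ren (fun n => f (n + k)) x.
Proof. intros. rewrite lift0_ren, ren_ren. reflexivity. Qed.

Lemma lift0_lift0 : forall x j k, lift 0 j (lift 0 k x) = lift 0 (k + j) x.
Proof. intros. rewrite !lift0_ren, ren_ren. apply ren_ext. intros; lia. Qed.

Lemma lift0_0 : forall x, lift 0 0 x = x.
Proof. intros. rewrite lift0_ren. apply ren_id. lia. Qed.

Lemma occurs_lift0 : forall t i k,
  occurs i (lift 0 k t) = true <-> k <= i /\ occurs (i - k) t = true.
Proof.
  intros. rewrite lift0_ren, occurs_ren. split.
  - intros [j [Hj E]]. subst. replace (j + k - k) with j by lia. split; auto; lia.
  - intros [H1 H2]. exists (i - k). split; auto; lia.
Qed.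

Fixpoint occS (i : nat) (s : list term) : bool :=
  match s with
  | [] => false
  | u :: s' => occurs i u || occS (S i) s'
  end.

Lemma occurs_plugS : forall s X i,
  occurs i (plugS s X) = occS i s || occurs (i + length s) X.
Proof.
  induction s; intros X i; simpl.
  - rewrite Nat.add_0_r. reflexivity.
  - rewrite IHs. replace (S i + length s) with (i + S (length s)) by lia.
    destruct (occurs i a), (occS (S i) s), (occurs (i + S (length s)) X); reflexivity.
Qed.

Lemma root_m_ren : forall r r' f, root_m r r' -> root_m (ren f r) (ren f r').
Proof.
  intros r r' f H. destruct H as [s b u]. simpl.
  rewrite !ren_plugS. simpl.
  replace (ren (upn (length s) f) (lift 0 (length s) u))
    with (lift 0 (length (rens f s)) (ren f u)).
  - apply RootM.
  - rewrite rens_length, !lift0_ren, !ren_ren. apply ren_ext. intros n. unfold upn.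
    destruct (Nat.ltb_spec (n + length s) (length s)); [lia|].
    f_equal. f_equal. lia.
Qed.

Lemma occ0_up : forall t f, occurs 0 t = false -> occurs 0 (ren (up f) t) = false.
Proof.
  intros t f H. destruct (occurs 0 (ren (up f) t)) eqn:E; auto.
  apply occurs_ren in E as [[|j] [Hj E]]; simpl in E; try discriminate.
  congruence.
Qed.

Lemma root_gcv_ren : forall r r' f, root_gcv r r' -> root_gcv (ren f r) (ren f r').
Proof.
  intros r r' f H. destruct H as [t s v [c ->] H0]. simpl. rewrite !ren_plugS. simpl.
  replace (ren (upn (length s) f) (lift 0 (length s) (lower 0 t)))
    with (lift 0 (length (rens f s)) (lower 0 (ren (up f) t))).
  - apply RootGcv. eexists; reflexivity. apply occ0_up; auto.
  - rewrite rens_length, !lift0_ren, !lower_ren, !ren_ren. apply ren_ext_occ.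
    intros [|m] Hm; [congruence|]. unfold lowf, upn, up; simpl.
    destruct (Nat.ltb_spec (m + length s) (length s)); [lia|].
    replace (m + length s - length s) with m by lia. reflexivity.
Qed.

Inductive par : list term -> term -> term -> nat -> Prop :=
| p_var : forall e i, par e (Var i) (Var i) 0
| p_sub : forall e i, i < length e ->
    par e (Var i) (lift 0 (S i) (nth i e (Var 0))) 1
| p_lam : forall e b, par e (Lam b) (Lam b) 0
| p_app : forall e a a' b b' n m, par e a a' n -> par e b b' m ->
    par e (App a b) (App a' b') (n + m)
| p_es : forall e a a' b b' n m, par (b :: e) a a' n -> par e b b' m ->
    par e (ES a b) (ES a' b') (n + m)
| p_mr : forall e a a' b b' r n m, par e a a' n -> par e b b' m ->
    root_m (App a' b') r -> par e (App a b) r (S (n + m))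
| p_gr : forall e a a' b b' r n m, par (b :: e) a a' n -> par e b b' m ->
    root_gcv (ES a' b') r -> par e (ES a b) r (S (n + m)).

Inductive mode := MA | MN.

Inductive ys : mode -> list term -> term -> term -> Prop :=
| y_m : forall md e r r', root_m r r' -> ys md e r r'
| y_g : forall md e r r', root_gcv r r' -> ys md e r r'
| y_var : forall md e i, i < length e ->
    ys md e (Var i) (lift 0 (S i) (nth i e (Var 0)))
| y_app : forall md e a a' b, ys MN e a a' -> ys md e (App a b) (App a' b)
| y_body : forall md e a a' b, ys md (b :: e) a a' -> ys md e (ES a b) (ES a' b)
| y_arg : forall e a b b', answer a -> ys MA e b b' -> ys MA e (ES a b) (ES a b').

Definition EnvOK (f : nat -> nat) (e e' : list term) (t : term) :=
  forall i, i < length e -> occurs i t = true ->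
    f i < length e' /\
    lift 0 (S (f i)) (nth (f i) e' (Var 0)) = ren f (lift 0 (S i) (nth i e (Var 0))).

Lemma EnvOK_sub : forall f e e' t t',
  EnvOK f e e' t -> (forall i, occurs i t' = true -> occurs i t = true) -> EnvOK f e e' t'.
Proof. unfold EnvOK. intros. apply H; auto. Qed.

Lemma EnvOK_up : forall f e e' a b,
  EnvOK f e e' (ES a b) -> EnvOK (up f) (b :: e) (ren f b :: e') a.
Proof.
  unfold EnvOK. intros f e e' a b H [|i] Hi Ho; simpl.
  - split; [lia|]. rewrite up_lift1. reflexivity.
  - simpl in Hi. destruct (H i) as [H1 H2]; [lia| simpl; rewrite Ho; auto|].
    change (up f (S i)) with (S (f i)); simpl.
    split; [lia|].
    replace (S (S (f i))) with (S (f i) + 1) by lia.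
    rewrite <- lift0_lift0, H2.
    replace (S (S i)) with (S i + 1) by lia.
    rewrite <- lift0_lift0, up_lift1. reflexivity.
Qed.

Lemma EnvOK_shift : forall pre e t,
  EnvOK (fun n => n + length pre) e (pre ++ e) t.
Proof.
  unfold EnvOK. intros. split.
  - rewrite length_app. lia.
  - rewrite app_nth2 by lia. replace (i + length pre - length pre) with i by lia.
    rewrite lift0_ren, lift0_ren, ren_ren. apply ren_ext. intros; lia.
Qed.

Lemma EnvOK_lower : forall b e t, occurs 0 t = false -> EnvOK (lowf 0) (b :: e) e t.
Proof.
  unfold EnvOK. intros b e t H0 [|i] Hi Ho; [congruence|]. simpl in *.
  split; [unfold lowf; simpl; lia|].
  unfold lowf at 1 2; simpl.
  rewrite !lift0_ren, ren_ren. apply ren_ext. intros n. unfold lowf.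
  destruct (Nat.ltb_spec 0 (n + S (S i))); lia.
Qed.

Lemma par_ren : forall e t t' n, par e t t' n ->
  forall f e', EnvOK f e e' t -> par e' (ren f t) (ren f t') n.
Proof.
  induction 1; intros f e' Hok; simpl.
  - constructor.
  - destruct (Hok i) as [H1 H2]; auto. simpl. apply Nat.eqb_refl.
    rewrite <- H2. constructor. auto.
  - constructor.
  - constructor; [apply IHpar1|apply IHpar2]; eapply EnvOK_sub; eauto;
      intros; simpl; rewrite H1; auto with bool.
  - constructor.
    + apply IHpar1. apply EnvOK_up. auto.
    + apply IHpar2. eapply EnvOK_sub; eauto; intros; simpl; rewrite H1; auto with bool.
  - econstructor.
    + apply IHpar1. eapply EnvOK_sub; eauto; intros; simpl; rewrite H2; auto with bool.
    + apply IHpar2. eapply EnvOK_sub; eauto; intros; simpl; rewrite H2; auto with bool.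
    + apply (root_m_ren _ _ f) in H1. exact H1.
  - econstructor.
    + apply IHpar1. apply EnvOK_up. auto.
    + apply IHpar2. eapply EnvOK_sub; eauto; intros; simpl; rewrite H2; auto with bool.
    + apply (root_gcv_ren _ _ f) in H1. exact H1.
Qed.

Lemma answer_ren : forall t f, answer t -> answer (ren f t).
Proof.
  intros t f H. revert f. induction H; intros f; simpl; constructor; auto.
Qed.

Lemma ys_ren : forall md e t t', ys md e t t' ->
  forall f e', EnvOK f e e' t -> ys md e' (ren f t) (ren f t').
Proof.
  induction 1; intros f e' Hok; simpl.
  - apply y_m. apply root_m_ren. auto.
  - apply y_g. apply root_gcv_ren. auto.
  - destruct (Hok i) as [H1 H2]; auto. simpl. apply Nat.eqb_refl.
    rewrite <- H2. apply y_var. auto.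
  - apply y_app. apply IHys. eapply EnvOK_sub; eauto; intros; simpl; rewrite H0; auto with bool.
  - apply y_body. apply IHys. apply EnvOK_up. auto.
  - apply y_arg. apply answer_ren; auto.
    apply IHys. eapply EnvOK_sub; eauto; intros; simpl; rewrite H1; auto with bool.
Qed.

Lemma par_refl : forall t e, par e t t 0.
Proof.
  induction t; intros e.
  - constructor.
  - constructor.
  - change 0 with (0 + 0). constructor; auto.
  - change 0 with (0 + 0). constructor; auto.
Qed.

Lemma par_0_eq : forall e t u, par e t u 0 -> t = u.
Proof.
  intros e t u H. remember 0 as z eqn:Ez. revert Ez.
  induction H; intros Ez; try discriminate; auto.
  - assert (n = 0) by lia. assert (m = 0) by lia. subst. f_equal; auto.
  - assert (n = 0) by lia. assert (m = 0) by lia. subst. f_equal; auto.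
Qed.

Lemma plugS_lam_inj : forall s s' c c',
  plugS s (Lam c) = plugS s' (Lam c') -> s = s' /\ c = c'.
Proof.
  induction s; destruct s'; simpl; intros c c' H; try discriminate.
  - injection H; auto.
  - injection H as H1 H2. apply IHs in H1 as [-> ->]. subst. auto.
Qed.

Lemma root_m_fun : forall r r1 r2, root_m r r1 -> root_m r r2 -> r1 = r2.
Proof.
  intros r r1 r2 H1 H2. destruct H1. inversion H2; subst.
  apply plugS_lam_inj in H0 as [-> ->]. reflexivity.
Qed.

Lemma root_gcv_fun : forall r r1 r2, root_gcv r r1 -> root_gcv r r2 -> r1 = r2.
Proof.
  intros r r1 r2 H1 H2. destruct H1 as [t s v [c ->] H0]. inversion H2; subst.
  destruct H3 as [c' ->]. apply plugS_lam_inj in H1 as [-> ->]. reflexivity.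
Qed.

Lemma answer_plugS_inv : forall s X, answer (plugS s X) -> Forall answer s /\ answer X.
Proof.
  induction s; simpl; intros X H; auto.
  inversion H; subst. apply IHs in H2 as [H4 H5]. auto.
Qed.

Lemma answer_plugS : forall s X, Forall answer s -> answer X -> answer (plugS s X).
Proof.
  induction s; simpl; intros X H1 H2; auto. inversion H1; subst. constructor; auto.
Qed.

Lemma answer_shape : forall a, answer a -> exists s c, a = plugS s (Lam c).
Proof.
  induction 1.
  - exists [], b. reflexivity.
  - destruct IHanswer1 as [s [c ->]]. exists (a' :: s), c. reflexivity.
Qed.

Lemma strict_answer_answer : forall a, strict_answer a -> answer a.
Proof. induction 1; constructor; auto. Qed.

Lemma answer_dec : forall t, answer t \/ ~ answer t.
Proof.
  induction t.
  - right; intros H; inversion H.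
  - left; constructor.
  - right; intros H; inversion H.
  - destruct IHt1; [destruct IHt2|].
    + left; constructor; auto.
    + right; intros H'; inversion H'; auto.
    + right; intros H'; inversion H'; auto.
Qed.

Lemma strict_dec : forall t, strict_answer t \/ ~ strict_answer t.
Proof.
  induction t.
  - right; intros H; inversion H.
  - left; constructor.
  - right; intros H; inversion H.
  - destruct IHt1; [destruct IHt2|].
    + destruct (occurs 0 t1) eqn:E.
      * left; constructor; auto.
      * right; intros H'; inversion H'; congruence.
    + right; intros H'; inversion H'; auto.
    + right; intros H'; inversion H'; auto.
Qed.

Lemma lower0_answer : forall a, answer a -> answer (lower 0 a).
Proof. intros. rewrite lower_ren. apply answer_ren. auto. Qed.

Lemma lift0_answer : forall a k, answer a -> answer (lift 0 k a).
Proof. intros. rewrite lift0_ren. apply answer_ren. auto. Qed.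

Lemma root_gcv_answer : forall a b r, answer a -> answer b -> root_gcv (ES a b) r -> answer r.
Proof.
  intros a b r Ha Hb H. inversion H; subst.
  apply answer_plugS_inv in Hb as [Hs _].
  apply answer_plugS; auto. apply lift0_answer, lower0_answer. auto.
Qed.

Lemma par_answer : forall e a a' n, par e a a' n -> answer a -> answer a'.
Proof.
  induction 1; intros Ha; inversion Ha; subst; try constructor; auto.
  eapply root_gcv_answer; [| |eauto]; auto.
Qed.

Lemma par_answer_env : forall e a a' n, par e a a' n -> answer a ->
  forall e2, par e2 a a' n.
Proof.
  induction 1; intros Ha e2; inversion Ha; subst; try (econstructor; eauto; fail).
Qed.

Lemma ys_answer : forall md e a a', ys md e a a' -> answer a -> answer a'.
Proof.
  induction 1; intros Ha.
  - inversion H; subst. inversion Ha.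
  - inversion H; subst. inversion Ha; subst. eapply root_gcv_answer; [| |eauto]; auto.
  - inversion Ha.
  - inversion Ha.
  - inversion Ha; subst. constructor; auto.
  - inversion Ha; subst. constructor; auto.
Qed.

Lemma ys_answer_env : forall md e a a', ys md e a a' -> answer a ->
  forall e2, ys md e2 a a'.
Proof.
  induction 1; intros Ha e2; inversion Ha; subst.
  all: try (inversion H; fail).
  all: try (apply y_g; auto; fail).
  - apply y_body. auto.
  - apply y_arg; auto.
Qed.

Lemma strict_par : forall e a a' n, par e a a' n -> strict_answer a -> a' = a /\ n = 0.
Proof.
  induction 1; intros Ha; inversion Ha; subst; auto.
  - destruct IHpar1, IHpar2; auto. subst. auto.
  - destruct IHpar1, IHpar2; auto. subst. inversion H1; subst. congruence.
Qed.

Lemma strict_ys : forall md e a a', ys md e a a' -> strict_answer a -> False.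
Proof.
  induction 1; intros Ha.
  - inversion H; subst. inversion Ha.
  - inversion H; subst. inversion Ha; subst. congruence.
  - inversion Ha.
  - inversion Ha.
  - inversion Ha; subst. auto.
  - inversion Ha; subst. auto.
Qed.

Definition OccFrom (e : list term) (t : term) (c : nat) :=
  occurs c t = true \/ exists i, i < length e /\ occurs i t = true /\
     occurs c (lift 0 (S i) (nth i e (Var 0))) = true.

Lemma occ_mono : forall e t T c,
  (forall j, occurs j t = true -> occurs j T = true) -> OccFrom e t c -> OccFrom e T c.
Proof.
  unfold OccFrom. intros e t T c H [H1|[i [H1 [H2 H3]]]]; auto.
  right. exists i. auto.
Qed.

Lemma occ_body : forall a b e c, OccFrom (b :: e) a (S c) -> OccFrom e (ES a b) c.
Proof.
  unfold OccFrom. intros a b e c [H|[[|i] [H1 [H2 H3]]]]; simpl.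
  - left. rewrite H. auto.
  - left. simpl in H3. apply occurs_lift0 in H3 as [_ H3].
    replace (S c - 1) with c in H3 by lia. rewrite H3. auto with bool.
  - right. exists i. simpl in H1. split; [lia|]. rewrite H2. split; auto.
    simpl in H3. apply occurs_lift0 in H3 as [H4 H5]. apply occurs_lift0.
    split; [lia|]. replace (c - S i) with (S c - S (S i)) by lia. auto.
Qed.

Lemma root_m_occ : forall r r' c, root_m r r' -> occurs c r' = true -> occurs c r = true.
Proof.
  intros r r' c H. destruct H as [s b u]. simpl.
  rewrite !occurs_plugS. simpl. intros H.
  apply orb_true_iff in H as [H|H]; [rewrite H; auto|].
  apply orb_true_iff in H as [H|H]; [rewrite H; auto with bool|].
  apply occurs_lift0 in H as [_ H]. replace (c + length s - length s) with c in H by lia.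
  rewrite H. auto with bool.
Qed.

Lemma root_gcv_occ : forall r r' c, root_gcv r r' -> occurs c r' = true -> occurs c r = true.
Proof.
  intros r r' c H. destruct H as [t s v Hv H0]. simpl.
  rewrite !occurs_plugS. intros H.
  apply orb_true_iff in H as [H|H]; [rewrite H; auto with bool|].
  apply occurs_lift0 in H as [_ H]. replace (c + length s - length s) with c in H by lia.
  rewrite lower_ren in H. apply occurs_ren in H as [[|j] [Hj E]]; [congruence|].
  unfold lowf in E; simpl in E. subst. rewrite Hj. auto.
Qed.

Lemma par_occ : forall e t t' n, par e t t' n -> forall c, occurs c t' = true -> OccFrom e t c.
Proof.
  induction 1; intros c Hc; simpl in *.
  - left; auto.
  - right. exists i. split; auto. split; auto. apply Nat.eqb_refl.
  - left; auto.
  - apply orb_true_iff in Hc as [Hc|Hc].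
    + eapply occ_mono; [|apply IHpar1; eauto]. intros j Hj; simpl; rewrite Hj; auto.
    + eapply occ_mono; [|apply IHpar2; eauto]. intros j Hj; simpl; rewrite Hj; auto with bool.
  - apply orb_true_iff in Hc as [Hc|Hc].
    + apply occ_body. auto.
    + eapply occ_mono; [|apply IHpar2; eauto]. intros j Hj; simpl; rewrite Hj; auto with bool.
  - eapply root_m_occ in Hc; eauto. simpl in Hc. apply orb_true_iff in Hc as [Hc|Hc].
    + eapply occ_mono; [|apply IHpar1; eauto]. intros j Hj; simpl; rewrite Hj; auto.
    + eapply occ_mono; [|apply IHpar2; eauto]. intros j Hj; simpl; rewrite Hj; auto with bool.
  - eapply root_gcv_occ in Hc; eauto. simpl in Hc. apply orb_true_iff in Hc as [Hc|Hc].
    + apply occ_body. auto.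
    + eapply occ_mono; [|apply IHpar2; eauto]. intros j Hj; simpl; rewrite Hj; auto with bool.
Qed.

Lemma ys_occ : forall md e t t', ys md e t t' -> forall c, occurs c t' = true -> OccFrom e t c.
Proof.
  induction 1; intros c Hc; simpl in *.
  - left. eapply root_m_occ; eauto.
  - left. eapply root_gcv_occ; eauto.
  - right. exists i. split; auto. split; auto. apply Nat.eqb_refl.
  - apply orb_true_iff in Hc as [Hc|Hc].
    + eapply occ_mono; [|apply IHys; eauto]. intros j Hj; simpl; rewrite Hj; auto.
    + left. simpl. rewrite Hc. auto with bool.
  - apply orb_true_iff in Hc as [Hc|Hc].
    + apply occ_body. auto.
    + left. simpl. rewrite Hc. auto with bool.
  - apply orb_true_iff in Hc as [Hc|Hc].
    + left. simpl. rewrite Hc. auto with bool.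
    + eapply occ_mono; [|apply IHys; eauto]. intros j Hj; simpl; rewrite Hj; auto with bool.
Qed.

Lemma occ0_lift : forall i x, occurs 0 (lift 0 (S i) x) = false.
Proof.
  intros. destruct (occurs 0 (lift 0 (S i) x)) eqn:E; auto.
  apply occurs_lift0 in E. lia.
Qed.

Lemma par_occ0 : forall e t t' n, par e t t' n -> occurs 0 t = false -> occurs 0 t' = false.
Proof.
  intros. destruct (occurs 0 t') eqn:E; auto.
  eapply par_occ in E; eauto. destruct E as [E|[i [_ [_ E]]]]; [congruence|].
  rewrite occ0_lift in E. discriminate.
Qed.

Lemma ys_occ0 : forall md e t t', ys md e t t' -> occurs 0 t = false -> occurs 0 t' = false.
Proof.
  intros. destruct (occurs 0 t') eqn:E; auto.
  eapply ys_occ in E; eauto. destruct E as [E|[i [_ [_ E]]]]; [congruence|].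
  rewrite occ0_lift in E. discriminate.
Qed.

Definition Cl (t : term) := forall c, occurs c t = false.

Lemma par_closed : forall t t' n, par [] t t' n -> Cl t -> Cl t'.
Proof.
  intros t t' n H Ht c. destruct (occurs c t') eqn:E; auto.
  eapply par_occ in E; eauto. destruct E as [E|[i [Hi _]]]; [congruence|].
  simpl in Hi. lia.
Qed.

Lemma ys_closed : forall md t t', ys md [] t t' -> Cl t -> Cl t'.
Proof.
  intros md t t' H Ht c. destruct (occurs c t') eqn:E; auto.
  eapply ys_occ in E; eauto. destruct E as [E|[i [Hi _]]]; [congruence|].
  simpl in Hi. lia.
Qed.

Lemma closed_at_occ : forall t n, closed_at n t -> forall c, occurs c t = true -> c < n.
Proof.
  induction t; simpl; intros k H c Hc.
  - apply Nat.eqb_eq in Hc. lia.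
  - apply (IHt (S k)) in Hc; auto. lia.
  - destruct H. apply orb_true_iff in Hc as [Hc|Hc]; eauto.
  - destruct H. apply orb_true_iff in Hc as [Hc|Hc]; eauto.
    apply (IHt1 (S k)) in Hc; auto. lia.
Qed.

Lemma closed_Cl : forall t, closed t -> Cl t.
Proof.
  unfold closed, Cl. intros t H c. destruct (occurs c t) eqn:E; auto.
  apply closed_at_occ with (c := c) in H; auto. lia.
Qed.

Lemma progressN : forall t e, (forall i, occurs i t = true -> i < length e) ->
  (exists t', ys MN e t t') \/ exists s c, t = plugS s (Lam c).
Proof.
  induction t; intros e H; simpl in H.
  - left. eexists. apply y_var. apply H. apply Nat.eqb_refl.
  - right. exists [], t. reflexivity.
  - left. destruct (IHt1 e) as [[a' Ha]|[s [c ->]]].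
    + intros i Hi. apply H. rewrite Hi. auto.
    + eexists. apply y_app. eauto.
    + eexists. apply y_m. apply RootM.
  - destruct (IHt1 (t2 :: e)) as [[a' Ha]|[s [c ->]]].
    + intros [|i] Hi; simpl; [lia|]. assert (i < length e); [|lia].
      apply H. rewrite Hi. auto.
    + left. eexists. apply y_body. eauto.
    + right. exists (t2 :: s), c. reflexivity.
Qed.

Lemma progressA : forall t e, (forall i, occurs i t = true -> i < length e) ->
  strict_answer t \/ exists t', ys MA e t t'.
Proof.
  induction t; intros e H; simpl in H.
  - right. eexists. apply y_var. apply H. apply Nat.eqb_refl.
  - left. constructor.
  - right. destruct (progressN t1 e) as [[a' Ha]|[s [c ->]]].
    + intros i Hi. apply H. rewrite Hi. auto.
    + eexists. apply y_app. eauto.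
    + eexists. apply y_m. apply RootM.
  - destruct (IHt1 (t2 :: e)) as [Ha|[a' Ha]].
    + intros [|i] Hi; simpl; [lia|]. assert (i < length e); [|lia].
      apply H. rewrite Hi. auto.
    + destruct (IHt2 e) as [Hb|[b' Hb]].
      * intros i Hi. apply H. rewrite Hi. auto with bool.
      * destruct (occurs 0 t1) eqn:E.
        -- left. constructor; auto.
        -- right. apply strict_answer_answer, answer_shape in Hb as [s [c ->]].
           eexists. apply y_g. apply RootGcv; auto. eexists; reflexivity.
      * right. eexists. apply y_arg; eauto. apply strict_answer_answer; auto.
    + right. eexists. apply y_body. eauto.
Qed.

Fixpoint envN (N : nctx) : list term :=
  match N with NHole => [] | NAppL N' _ => envN N' | NESBody N' u => envN N' ++ [u] end.
Fixpoint envA (A : actx) : list term :=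
  match A with AHole => [] | AESArg _ A' => envA A' | AESBody A' u => envA A' ++ [u] end.
Fixpoint ncomp (N1 N2 : nctx) : nctx :=
  match N1 with
  | NHole => N2
  | NAppL N u => NAppL (ncomp N N2) u
  | NESBody N u => NESBody (ncomp N N2) u
  end.
Fixpoint acomp (A1 A2 : actx) : actx :=
  match A1 with
  | AHole => A2
  | AESArg a A => AESArg a (acomp A A2)
  | AESBody A u => AESBody (acomp A A2) u
  end.

Lemma plugN_comp : forall N1 N2 t, plugN (ncomp N1 N2) t = plugN N1 (plugN N2 t).
Proof. induction N1; intros; simpl; f_equal; auto. Qed.
Lemma plugA_comp : forall A1 A2 t, plugA (acomp A1 A2) t = plugA A1 (plugA A2 t).
Proof. induction A1; intros; simpl; f_equal; auto. Qed.
Lemma envN_comp : forall N1 N2, envN (ncomp N1 N2) = envN N2 ++ envN N1.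
Proof. induction N1; intros; simpl; auto using app_nil_r. rewrite IHN1, app_assoc. auto. Qed.
Lemma envA_comp : forall A1 A2, envA (acomp A1 A2) = envA A2 ++ envA A1.
Proof. induction A1; intros; simpl; auto using app_nil_r. rewrite IHA1, app_assoc. auto. Qed.
Lemma validA_comp : forall A1 A2, validA (acomp A1 A2) <-> validA A1 /\ validA A2.
Proof. induction A1; intros; simpl; try rewrite IHA1; tauto. Qed.
Lemma depthN_len : forall N, depthN N = length (envN N).
Proof. induction N; simpl; auto. rewrite length_app. simpl. lia. Qed.
Lemma depthA_len : forall A, depthA A = length (envA A).
Proof. induction A; simpl; auto. rewrite length_app. simpl. lia. Qed.

Lemma N_split : forall N i, i < length (envN N) ->
  exists N1 N2 u, N = ncomp N1 (NESBody N2 u) /\ length (envN N2) = i /\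
    nth i (envN N) (Var 0) = u.
Proof.
  induction N; simpl; intros i Hi.
  - lia.
  - destruct (IHN i Hi) as [N1 [N2 [u [E1 [E2 E3]]]]].
    exists (NAppL N1 t), N2, u. subst. auto.
  - rewrite length_app in Hi. simpl in Hi.
    destruct (Nat.lt_ge_cases i (length (envN N))).
    + destruct (IHN i H) as [N1 [N2 [u [E1 [E2 E3]]]]].
      exists (NESBody N1 t), N2, u. subst. split; auto. split; auto.
      rewrite app_nth1; auto.
    + exists NHole, N, t. simpl. split; auto. split; [lia|].
      rewrite app_nth2 by lia. replace (i - length (envN N)) with 0 by lia. auto.
Qed.

Lemma A_split : forall A i, i < length (envA A) ->
  exists A1 A2 u, A = acomp A1 (AESBody A2 u) /\ length (envA A2) = i /\
    nth i (envA A) (Var 0) = u.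
Proof.
  induction A; simpl; intros i Hi.
  - lia.
  - destruct (IHA i Hi) as [N1 [N2 [u [E1 [E2 E3]]]]].
    exists (AESArg t N1), N2, u. subst. auto.
  - rewrite length_app in Hi. simpl in Hi.
    destruct (Nat.lt_ge_cases i (length (envA A))).
    + destruct (IHA i H) as [N1 [N2 [u [E1 [E2 E3]]]]].
      exists (AESBody N1 t), N2, u. subst. split; auto. split; auto.
      rewrite app_nth1; auto.
    + exists AHole, A, t. simpl. split; auto. split; [lia|].
      rewrite app_nth2 by lia. replace (i - length (envA A)) with 0 by lia. auto.
Qed.

Lemma ys_sound_gen : forall md e t t', ys md e t t' ->
  forall A N, validA A -> (md = MA -> N = NHole) -> e = envN N ++ envA A ->
  y_step (plugA A (plugN N t)) (plugA A (plugN N t')).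
Proof.
  induction 1; intros A N HA HN He.
  - exact (Y_m A N r r' HA H).
  - exact (Y_gcv A N r r' HA H).
  - subst e. destruct (Nat.lt_ge_cases i (length (envN N))) as [Hl|Hl].
    + destruct (N_split N i Hl) as [N1 [N2 [u [E1 [E2 E3]]]]].
      rewrite app_nth1 by auto. rewrite E3. subst N. rewrite !plugN_comp. simpl.
      pose proof (Y_eYN A N1 _ _ HA (RootEN N2 u)) as Y.
      rewrite depthN_len, E2 in Y. exact Y.
    + rewrite length_app in H.
      destruct (A_split A (i - length (envN N))) as [A1 [A2 [u [E1 [E2 E3]]]]]; [lia|].
      rewrite app_nth2 by auto. rewrite E3. subst A.
      apply validA_comp in HA as [HA1 HA2]. simpl in HA2.
      rewrite !plugA_comp. simpl.
      pose proof (Y_eAY A1 _ _ HA1 (RootEY A2 N u HA2)) as Y.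
      unfold depthY, plugY in Y. rewrite depthN_len, depthA_len, E2 in Y.
      replace (i - length (envN N) + length (envN N)) with i in Y by lia. exact Y.
  - specialize (IHys A (ncomp N (NAppL NHole b)) HA (fun H => ltac:(discriminate))).
    rewrite !plugN_comp in IHys. apply IHys. rewrite envN_comp. simpl. auto.
  - destruct md.
    + rewrite (HN eq_refl) in *. simpl.
      specialize (IHys (acomp A (AESBody AHole b)) NHole).
      rewrite !plugA_comp in IHys. apply IHys; auto.
      * apply validA_comp. simpl. auto.
      * rewrite envA_comp. simpl in *. subst. auto.
    + specialize (IHys A (ncomp N (NESBody NHole b)) HA (fun H => ltac:(discriminate))).
      rewrite !plugN_comp in IHys. apply IHys. rewrite envN_comp. simpl. subst. auto.
  - rewrite (HN eq_refl) in *. simpl.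
    specialize (IHys (acomp A (AESArg a AHole)) NHole).
    rewrite !plugA_comp in IHys. apply IHys; auto.
    + apply validA_comp. simpl. auto.
    + rewrite envA_comp. simpl in *. subst. auto.
Qed.

Lemma ys_sound : forall t t', ys MA [] t t' -> y_step t t'.
Proof.
  intros. exact (ys_sound_gen _ _ _ _ H AHole NHole I (fun _ => eq_refl) eq_refl).
Qed.

Fixpoint envW (W : wctx) : list term :=
  match W with
  | WHole => []
  | WAppL W' _ => envW W'
  | WAppR _ W' => envW W'
  | WESArg _ W' => envW W'
  | WESBody W' u => envW W' ++ [u]
  end.

Lemma depthW_len : forall W, depthW W = length (envW W).
Proof. induction W; simpl; auto. rewrite length_app. simpl. lia. Qed.

Lemma par_plugW : forall W e r r', par (envW W ++ e) r r' 1 ->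
  par e (plugW W r) (plugW W r') 1.
Proof.
  induction W; simpl; intros e r r' H; auto.
  - change 1 with (1 + 0). constructor; auto. apply par_refl.
  - change 1 with (0 + 1). constructor; auto. apply par_refl.
  - change 1 with (0 + 1). constructor; auto. apply par_refl.
  - change 1 with (1 + 0). constructor; auto. apply IHW. rewrite <- app_assoc in H. auto.
    apply par_refl.
Qed.

Lemma w_root_par : forall e r r', w_root r r' -> par e r r' 1.
Proof.
  intros e r r' H. destruct H as [r r' H|r r' H|r r' H].
  - destruct H. eapply (p_mr e _ _ _ _ _ 0 0); [apply par_refl|apply par_refl|constructor].
  - destruct H. change 1 with (1 + 0). constructor; [|apply par_refl].
    apply par_plugW. 
    replace (lift 0 (S (depthW K)) u) with
      (lift 0 (S (depthW K)) (nth (depthW K) (envW K ++ u :: e) (Var 0))).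
    + apply p_sub. rewrite length_app, depthW_len. simpl. lia.
    + rewrite app_nth2; rewrite depthW_len; [|lia]. rewrite Nat.sub_diag. auto.
  - destruct H. eapply (p_gr e _ _ _ _ _ 0 0); [apply par_refl|apply par_refl|constructor; auto].
Qed.

Lemma w_par : forall t u, w_step t u -> par [] t u 1.
Proof.
  intros t u H. destruct H. apply par_plugW. apply w_root_par. auto.
Qed.

Lemma par_lift0 : forall e Q Q' m, par e Q Q' m ->
  forall pre, par (pre ++ e) (lift 0 (length pre) Q) (lift 0 (length pre) Q') m.
Proof.
  intros. rewrite !lift0_ren. eapply par_ren; eauto. apply EnvOK_shift.
Qed.

Lemma ys_lift0 : forall md e Q Q', ys md e Q Q' ->
  forall pre, ys md (pre ++ e) (lift 0 (length pre) Q) (lift 0 (length pre) Q').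
Proof.
  intros. rewrite !lift0_ren. eapply ys_ren; eauto. apply EnvOK_shift.
Qed.

Lemma par_lower0 : forall b e Q Q' m, par (b :: e) Q Q' m -> occurs 0 Q = false ->
  par e (lower 0 Q) (lower 0 Q') m.
Proof.
  intros. rewrite !lower_ren. eapply par_ren; eauto. apply EnvOK_lower; auto.
Qed.

Lemma ys_lower0 : forall md b e Q Q', ys md (b :: e) Q Q' -> occurs 0 Q = false ->
  ys md e (lower 0 Q) (lower 0 Q').
Proof.
  intros. rewrite !lower_ren. eapply ys_ren; eauto. apply EnvOK_lower; auto.
Qed.

Lemma ysN_any : forall e t t', ys MN e t t' -> forall md, ys md e t t'.
Proof.
  intros e t t' H. remember MN as md0 eqn:E. revert E.
  induction H; intros E md'; subst; try discriminate.
  - apply y_m; auto.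
  - apply y_g; auto.
  - apply y_var; auto.
  - apply y_app; auto.
  - apply y_body; auto.
Qed.

Definition G (j : nat) : nat -> nat := fun n => lowf 0 n + j.

Lemma GcvPlug : forall sv s0 X,
  plugS sv (lift 0 (length sv) (lower 0 (plugS s0 X))) =
  plugS (sv ++ rens (G (length sv)) s0) (ren (upn (length s0) (G (length sv))) X).
Proof.
  intros. rewrite plugS_app. f_equal.
  rewrite lift0_ren, lower_ren, ren_ren, ren_plugS. reflexivity.
Qed.

Lemma hole_lift : forall j k Q, ren (upn k (G j)) (lift 0 (S k) Q) = lift 0 (j + k) Q.
Proof.
  intros. rewrite !lift0_ren, ren_ren. apply ren_ext. intros n. unfold upn, G, lowf.
  destruct (Nat.ltb_spec (n + S k) k); [lia|].
  replace (n + S k - k) with (S n) by lia. simpl. lia.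
Qed.

Lemma hole_ES : forall j k c Q, ren (upn k (G j)) (ES c (lift 0 (S k) Q)) =
  ES (ren (up (upn k (G j))) c) (lift 0 (j + k) Q).
Proof. intros. simpl. rewrite hole_lift. auto. Qed.

Lemma occ_hole_ES : forall s c Q, occurs 0 (plugS s (Lam c)) = false ->
  occurs 0 (plugS s (ES c (lift 0 (S (length s)) Q))) = false.
Proof.
  intros s c Q H. rewrite occurs_plugS in *. simpl in *.
  apply orb_false_iff in H as [H1 H2]. rewrite H1, H2. simpl.
  destruct (occurs (length s) (lift 0 (S (length s)) Q)) eqn:E; auto.
  apply occurs_lift0 in E. lia.
Qed.

Lemma occ_hole_lift : forall s c Q, occurs 0 (plugS s (Lam c)) = false ->
  occurs 0 (plugS s (lift 0 (S (length s)) Q)) = false.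
Proof.
  intros s c Q H. rewrite occurs_plugS in *. simpl in *.
  apply orb_false_iff in H as [H1 H2]. rewrite H1. simpl.
  destruct (occurs (length s) (lift 0 (S (length s)) Q)) eqn:E; auto.
  apply occurs_lift0 in E. lia.
Qed.

Lemma lift_S : forall k Q, lift 0 (S k) Q = lift 0 k (lift 0 1 Q).
Proof. intros. rewrite lift0_lift0. reflexivity. Qed.

Lemma par_count : forall e t u n n', par e t u n -> n = n' -> par e t u n'.
Proof. intros; subst; auto. Qed.

Lemma ys_count_dummy : True. Proof. exact I. Qed.

Lemma spine_par : forall s c e h' n, par e (plugS s (Lam c)) h' n ->
  exists s' c', h' = plugS s' (Lam c') /\
   (forall Q Q' m, par e Q Q' m ->
      par e (plugS s (ES c (lift 0 (length s) Q)))
            (plugS s' (ES c' (lift 0 (length s') Q'))) (n + m)) /\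
   (forall Q Q' m, par e Q Q' m ->
      par e (plugS s (lift 0 (length s) Q)) (plugS s' (lift 0 (length s') Q')) (n + m)).
Proof.
  induction s as [|u s0 IH]; intros c e h' n H; simpl in H.
  - inversion H; subst. exists [], c. simpl. split; auto. split.
    + intros Q Q' k HQ. rewrite !lift0_0. apply (p_es e c c Q Q' 0 k); auto. apply par_refl.
    + intros Q Q' k HQ. rewrite !lift0_0. auto.
  - inversion H; subst; clear H.
    +
      match goal with H3 : par (u :: e) (plugS s0 (Lam c)) ?a ?n1, H6 : par e u ?b ?n2 |- _ =>
        rename H3 into Ha; rename H6 into Hb; rename n1 into na; rename n2 into nb end.
      destruct (IH _ _ _ _ Ha) as [s0' [c' [E [P1 P2]]]]. subst.
      exists (b' :: s0'), c'. split; auto. simpl. split.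
      * intros Q Q' k HQ. rewrite (lift_S (length s0) Q), (lift_S (length s0') Q').
        eapply par_count. apply p_es; [apply P1; apply (par_lift0 _ _ _ _ HQ [u])|exact Hb].
        lia.
      * intros Q Q' k HQ. rewrite (lift_S (length s0) Q), (lift_S (length s0') Q').
        eapply par_count. apply p_es; [apply P2; apply (par_lift0 _ _ _ _ HQ [u])|exact Hb].
        lia.
    +
      match goal with H3 : par (u :: e) (plugS s0 (Lam c)) ?a ?n1, H6 : par e u ?b ?n2,
        H7 : root_gcv _ _ |- _ =>
        rename H3 into Ha; rename H6 into Hb; rename H7 into Hr end.
      destruct (IH _ _ _ _ Ha) as [s0' [c' [E [P1 P2]]]]. subst.
      inversion Hr; subst. match goal with H2 : is_value _ |- _ => destruct H2 as [w ->] end.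
      match goal with Hr : root_gcv (ES _ (plugS ?x _)) _ |- _ => rename x into sv end.
      match goal with H3 : occurs 0 _ = false |- _ => rename H3 into Hocc end.
      rewrite GcvPlug. simpl.
      eexists (sv ++ rens (G (length sv)) s0'), _. split; [reflexivity|]. split.
      * intros Q Q' k HQ.
        assert (R : root_gcv (ES (plugS s0' (ES c' (lift 0 (S (length s0')) Q'))) (plugS sv (Lam w)))
          (plugS sv (lift 0 (length sv) (lower 0 (plugS s0' (ES c' (lift 0 (S (length s0')) Q'))))))).
        { apply RootGcv. eexists; eauto. apply occ_hole_ES; auto. }
        rewrite GcvPlug, hole_ES in R.
        rewrite length_app, rens_length.
        rewrite (lift_S (length s0) Q).
        eapply par_count. eapply p_gr; [|exact Hb|exact R].
        rewrite (lift_S (length s0') Q').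
        apply P1. apply (par_lift0 _ _ _ _ HQ [u]). lia.
      * intros Q Q' k HQ.
        assert (R : root_gcv (ES (plugS s0' (lift 0 (S (length s0')) Q')) (plugS sv (Lam w)))
          (plugS sv (lift 0 (length sv) (lower 0 (plugS s0' (lift 0 (S (length s0')) Q')))))).
        { apply RootGcv. eexists; eauto. apply occ_hole_lift with (c := c'); auto. }
        rewrite GcvPlug, hole_lift in R.
        rewrite length_app, rens_length.
        rewrite (lift_S (length s0) Q).
        eapply par_count. eapply p_gr; [|exact Hb|exact R].
        rewrite (lift_S (length s0') Q').
        apply P2. apply (par_lift0 _ _ _ _ HQ [u]). lia.
Qed.

Lemma spine_ysN : forall s c e X, ys MN e (plugS s (Lam c)) X ->
  exists s2 c2, X = plugS s2 (Lam c2) /\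
   forall Q, ys MN e (plugS s (ES c (lift 0 (length s) Q)))
                    (plugS s2 (ES c2 (lift 0 (length s2) Q))).
Proof.
  induction s as [|u s0 IH]; intros c e X H; simpl in H.
  - inversion H; subst; match goal with H1 : _ |- _ => solve [inversion H1] end.
  - inversion H; subst; clear H.
    + match goal with H1 : root_m _ _ |- _ => inversion H1 end.
    + match goal with Hr : root_gcv _ _ |- _ => inversion Hr; subst end.
      match goal with H2 : is_value _ |- _ => destruct H2 as [w ->] end.
      match goal with Hr : root_gcv (ES _ (plugS ?x _)) _ |- _ => rename x into sv end.
      match goal with H3 : occurs 0 _ = false |- _ => rename H3 into Hocc end.
      rewrite GcvPlug. simpl.
      eexists (sv ++ rens (G (length sv)) s0), _. split; [reflexivity|].
      intros Q.
      assert (R : root_gcv (ES (plugS s0 (ES c (lift 0 (S (length s0)) Q))) (plugS sv (Lam w)))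
        (plugS sv (lift 0 (length sv) (lower 0 (plugS s0 (ES c (lift 0 (S (length s0)) Q))))))).
      { apply RootGcv. eexists; eauto. apply occ_hole_ES; auto. }
      rewrite GcvPlug, hole_ES in R.
      rewrite length_app, rens_length. apply y_g. exact R.
    + match goal with H1 : ys MN (u :: e) _ _ |- _ => rename H1 into Hb end.
      destruct (IH _ _ _ Hb) as [s2 [c2 [E P]]]. subst.
      exists (u :: s2), c2. split; auto. intros Q. simpl.
      rewrite (lift_S (length s0) Q), (lift_S (length s2) Q). apply y_body. apply P.
Qed.

Lemma spine_ysA : forall s c e X, ys MA e (plugS s (Lam c)) X ->
  exists s2 c2, X = plugS s2 (Lam c2) /\
   forall Q, answer Q -> ys MA e (plugS s (lift 0 (length s) Q))
                    (plugS s2 (lift 0 (length s2) Q)).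
Proof.
  induction s as [|u s0 IH]; intros c e X H; simpl in H.
  - inversion H; subst; match goal with H1 : _ |- _ => solve [inversion H1] end.
  - inversion H; subst; clear H.
    + match goal with H1 : root_m _ _ |- _ => inversion H1 end.
    + match goal with Hr : root_gcv _ _ |- _ => inversion Hr; subst end.
      match goal with H2 : is_value _ |- _ => destruct H2 as [w ->] end.
      match goal with Hr : root_gcv (ES _ (plugS ?x _)) _ |- _ => rename x into sv end.
      match goal with H3 : occurs 0 _ = false |- _ => rename H3 into Hocc end.
      rewrite GcvPlug. simpl.
      eexists (sv ++ rens (G (length sv)) s0), _. split; [reflexivity|].
      intros Q HQ.
      assert (R : root_gcv (ES (plugS s0 (lift 0 (S (length s0)) Q)) (plugS sv (Lam w)))
        (plugS sv (lift 0 (length sv) (lower 0 (plugS s0 (lift 0 (S (length s0)) Q)))))).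
      { apply RootGcv. eexists; eauto. apply occ_hole_lift with (c := c); auto. }
      rewrite GcvPlug, hole_lift in R.
      rewrite length_app, rens_length. apply y_g. exact R.
    + match goal with H1 : ys MA (u :: e) _ _ |- _ => rename H1 into Hb end.
      destruct (IH _ _ _ Hb) as [s2 [c2 [E P]]]. subst.
      exists (u :: s2), c2. split; auto. intros Q HQ. simpl.
      rewrite (lift_S (length s0) Q), (lift_S (length s2) Q). apply y_body. apply P.
      apply lift0_answer; auto.
    + match goal with H1 : ys MA e u _ |- _ => rename H1 into Hu end.
      match goal with H1 : answer _ |- _ => rename H1 into Hans end.
      eexists (_ :: s0), c. split; [reflexivity|]. intros Q HQ. simpl.
      apply y_arg; auto.
      apply answer_plugS_inv in Hans as [Hs _]. apply answer_plugS; auto.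
      apply lift0_answer; auto.
Qed.

Inductive envR : list term -> list term -> Prop :=
| er_nil : envR [] []
| er_cons : forall s s' e e' k, par e s s' k -> envR e e' -> envR (s :: e) (s' :: e').

Lemma envR_len : forall e e', envR e e' -> length e = length e'.
Proof. induction 1; simpl; auto. Qed.

Lemma envR_nth : forall e e', envR e e' -> forall i, i < length e ->
  exists k, par (skipn (S i) e) (nth i e (Var 0)) (nth i e' (Var 0)) k.
Proof.
  induction 1; simpl; intros i Hi; [lia|].
  destruct i; simpl; eauto. apply IHenvR. lia.
Qed.

Lemma envR_lift : forall e e' i, envR e e' -> i < length e ->
  exists k, par e (lift 0 (S i) (nth i e (Var 0))) (lift 0 (S i) (nth i e' (Var 0))) k.
Proof.
  intros e e' i H Hi. destruct (envR_nth _ _ H i Hi) as [k Hk].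
  exists k. pose proof (par_lift0 _ _ _ _ Hk (firstn (S i) e)) as P.
  rewrite firstn_skipn in P. rewrite firstn_length_le in P by lia. exact P.
Qed.

Lemma ys_plugS : forall s md e X X', ys md (rev s ++ e) X X' ->
  ys md e (plugS s X) (plugS s X').
Proof.
  induction s; simpl; intros md e X X' H; auto.
  apply y_body. apply IHs. rewrite <- app_assoc in H. exact H.
Qed.

Lemma Res : forall e t u n, par e t u n ->
  forall md t1 e', ys md e t t1 -> envR e e' ->
  (1 <= n /\ par e t1 u (n - 1)) \/
  (exists s_ m, ys md e' u s_ /\ par e t1 s_ m /\ n <= m).
Proof.
  induction 1; intros md t1 e' Hy Her.
  -
    inversion Hy; subst;
      try (match goal with H1 : root_m _ _ |- _ => inversion H1 end);
      try (match goal with H1 : root_gcv _ _ |- _ => inversion H1 end).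
    match goal with H3 : i < length e |- _ => rename H3 into Hi end.
    right. destruct (envR_lift _ _ i Her Hi) as [k Hk].
    eexists _, k. split; [|split; [exact Hk|lia]].
    apply y_var. rewrite <- (envR_len _ _ Her). auto.
  -
    inversion Hy; subst;
      try (match goal with H1 : root_m _ _ |- _ => inversion H1 end);
      try (match goal with H1 : root_gcv _ _ |- _ => inversion H1 end).
    left. split; auto. apply par_refl.
  -
    inversion Hy; subst;
      try (match goal with H1 : root_m _ _ |- _ => inversion H1 end);
      try (match goal with H1 : root_gcv _ _ |- _ => inversion H1 end).
  -
    rename H into Ha, H0 into Hb.
    inversion Hy; subst;
      try (match goal with H1 : root_gcv _ _ |- _ => inversion H1 end).
    + match goal with H1 : root_m _ _ |- _ => inversion H1; subst end.
      destruct (spine_par _ _ _ _ _ Ha) as [s' [c' [E [P1 _]]]]. subst.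
      right. eexists _, _. split; [apply y_m; apply RootM|]. split; [apply P1; exact Hb|lia].
    + match goal with H1 : ys MN e a _ |- _ => rename H1 into Hya end.
      destruct (IHpar1 _ _ _ Hya Her) as [[L1 L2]|[s_ [m1 [R1 [R2 R3]]]]].
      * left. split; [lia|]. eapply par_count. apply p_app; eauto. lia.
      * right. eexists _, _. split; [apply y_app; exact R1|].
        split; [apply p_app; eauto|lia].
  -
    rename H into Ha, H0 into Hb.
    inversion Hy; subst;
      try (match goal with H1 : root_m _ _ |- _ => inversion H1 end).
    + match goal with H1 : root_gcv _ _ |- _ => inversion H1; subst end.
      match goal with H2 : is_value _ |- _ => destruct H2 as [w ->] end.
      match goal with H3 : occurs 0 _ = false |- _ => rename H3 into Hocc end.
      destruct (spine_par _ _ _ _ _ Hb) as [s' [c' [E [_ P2]]]]. subst.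
      right. eexists _, _. split.
      * apply y_g. apply RootGcv. eexists; eauto. eapply par_occ0; eauto.
      * split; [apply P2; eapply par_lower0; eauto|lia].
    + match goal with H1 : ys md (b :: e) a _ |- _ => rename H1 into Hya end.
      destruct (IHpar1 _ _ _ Hya (er_cons _ _ _ _ _ Hb Her)) as [[L1 L2]|[s_ [m1 [R1 [R2 R3]]]]].
      * left. split; [lia|]. eapply par_count. apply p_es; eauto. lia.
      * right. eexists _, _. split; [apply y_body; exact R1|].
        split; [apply p_es; eauto|lia].
    + match goal with H1 : ys MA e b _ |- _ => rename H1 into Hyb end.
      match goal with H1 : answer a |- _ => rename H1 into Hans end.
      destruct (IHpar2 _ _ _ Hyb Her) as [[L1 L2]|[s_ [m1 [R1 [R2 R3]]]]].
      * left. split; [lia|]. eapply par_count. apply p_es; eauto.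
        eapply par_answer_env; eauto. lia.
      * right. eexists _, _. split; [apply y_arg; [eapply par_answer; eauto|exact R1]|].
        split; [apply p_es; eauto; eapply par_answer_env; eauto|lia].
  -
    rename H into Ha, H0 into Hb, H1 into Hr.
    inversion Hy; subst;
      try (match goal with H1 : root_gcv _ _ |- _ => inversion H1 end).
    + match goal with H1 : root_m (App _ _) t1 |- _ => inversion H1; subst end.
      destruct (spine_par _ _ _ _ _ Ha) as [s' [c' [E [P1 _]]]]. subst.
      left. split; [lia|].
      rewrite (root_m_fun _ _ _ Hr (RootM s' c' b')).
      eapply par_count; [apply P1; exact Hb|lia].
    + match goal with H1 : ys MN e a _ |- _ => rename H1 into Hya end.
      destruct (IHpar1 _ _ _ Hya Her) as [[L1 L2]|[s_ [m1 [R1 [R2 R3]]]]].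
      * left. split; [lia|]. eapply par_count. eapply p_mr; eauto. lia.
      * inversion Hr; subst.
        destruct (spine_ysN _ _ _ _ R1) as [s2 [c2 [E P]]]. subst.
        right. eexists _, _. split; [apply ysN_any; apply P|].
        split; [eapply p_mr; [exact R2|exact Hb|apply RootM]|lia].
  -
    rename H into Ha, H0 into Hb, H1 into Hr.
    inversion Hy; subst;
      try (match goal with H1 : root_m _ _ |- _ => inversion H1 end).
    + match goal with H1 : root_gcv (ES a b) t1 |- _ => inversion H1; subst end.
      match goal with H2 : is_value _ |- _ => destruct H2 as [w ->] end.
      match goal with H3 : occurs 0 a = false |- _ => rename H3 into Hocc end.
      destruct (spine_par _ _ _ _ _ Hb) as [s' [c' [E [_ P2]]]]. subst.
      inversion Hr; subst.
      match goal with H2 : is_value _ |- _ => destruct H2 as [w' ->] end.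
      match goal with H1 : plugS _ (Lam _) = plugS _ (Lam _) |- _ =>
        apply plugS_lam_inj in H1 as [-> ->] end.
      left. split; [lia|].
      eapply par_count; [apply P2; eapply par_lower0; eauto|lia].
    + match goal with H1 : ys md (b :: e) a _ |- _ => rename H1 into Hya end.
      destruct (IHpar1 _ _ _ Hya (er_cons _ _ _ _ _ Hb Her)) as [[L1 L2]|[s_ [m1 [R1 [R2 R3]]]]].
      * left. split; [lia|]. eapply par_count. eapply p_gr; eauto. lia.
      * inversion Hr; subst.
        match goal with H3 : occurs 0 a' = false |- _ => rename H3 into Hocc end.
        right. exists (plugS s (lift 0 (length s) (lower 0 s_))), (S (m1 + m)). split.
        -- pose proof (ys_lift0 _ _ _ _ (ys_lower0 _ _ _ _ _ R1 Hocc) (rev s)) as Y.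
           rewrite length_rev in Y. apply ys_plugS. exact Y.
        -- split; [|lia]. eapply p_gr; [exact R2|exact Hb|]. apply RootGcv; auto.
           eapply ys_occ0; eauto.
    + match goal with H1 : ys MA e b _ |- _ => rename H1 into Hyb end.
      match goal with H1 : answer a |- _ => rename H1 into Hans end.
      destruct (IHpar2 _ _ _ Hyb Her) as [[L1 L2]|[s_ [m1 [R1 [R2 R3]]]]].
      * left. split; [lia|]. eapply par_count. eapply p_gr; eauto.
        eapply par_answer_env; eauto. lia.
      * inversion Hr; subst.
        match goal with H2 : is_value _ |- _ => destruct H2 as [w' ->] end.
        match goal with H3 : occurs 0 a' = false |- _ => rename H3 into Hocc end.
        destruct (spine_ysA _ _ _ _ R1) as [s2 [c2 [E P]]]. subst.
        right. exists (plugS s2 (lift 0 (length s2) (lower 0 a'))), (S (n + m1)). split.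
        -- apply P. apply lower0_answer. eapply par_answer; eauto.
        -- split; [|lia]. eapply p_gr; [eapply par_answer_env; eauto|exact R2|].
           apply RootGcv; auto. eexists; eauto.
Qed.

Lemma CP_m_app : forall md e a b t1 a2, root_m (App a b) t1 -> ys MN e a a2 ->
  exists s, ys md e t1 s /\ ys md e (App a2 b) s.
Proof.
  intros md e a b t1 a2 Hr Hy. inversion Hr; subst.
  destruct (spine_ysN _ _ _ _ Hy) as [s2 [c2 [E P]]]. subst.
  eexists. split; [apply ysN_any; apply P|apply y_m; apply RootM].
Qed.

Lemma CP_g_body : forall md e a b t1 a2, root_gcv (ES a b) t1 -> ys md (b :: e) a a2 ->
  exists s, ys md e t1 s /\ ys md e (ES a2 b) s.
Proof.
  intros md e a b t1 a2 Hr Hy. inversion Hr; subst.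
  match goal with H3 : occurs 0 a = false |- _ => rename H3 into Hocc end.
  exists (plugS s (lift 0 (length s) (lower 0 a2))). split.
  - pose proof (ys_lift0 _ _ _ _ (ys_lower0 _ _ _ _ _ Hy Hocc) (rev s)) as Y.
    rewrite length_rev in Y. apply ys_plugS. exact Y.
  - apply y_g. apply RootGcv; auto. eapply ys_occ0; eauto.
Qed.

Lemma CP_g_arg : forall e a b t1 b2, root_gcv (ES a b) t1 -> answer a -> ys MA e b b2 ->
  exists s, ys MA e t1 s /\ ys MA e (ES a b2) s.
Proof.
  intros e a b t1 b2 Hr Ha Hy. inversion Hr; subst.
  match goal with H2 : is_value _ |- _ => destruct H2 as [w ->] end.
  match goal with H3 : occurs 0 a = false |- _ => rename H3 into Hocc end.
  destruct (spine_ysA _ _ _ _ Hy) as [s2 [c2 [E P]]]. subst.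
  exists (plugS s2 (lift 0 (length s2) (lower 0 a))). split.
  - apply P. apply lower0_answer. auto.
  - apply y_g. apply RootGcv; auto. eexists; eauto.
Qed.

Lemma CP_body_arg : forall e a b a1 b2, answer a -> ys MA (b :: e) a a1 -> ys MA e b b2 ->
  exists s, ys MA e (ES a1 b) s /\ ys MA e (ES a b2) s.
Proof.
  intros e a b a1 b2 Ha H1 H2. exists (ES a1 b2). split.
  - apply y_arg; auto. eapply ys_answer; eauto.
  - apply y_body. eapply ys_answer_env; eauto.
Qed.

Ltac flip H := destruct H as [?s [?H1 ?H2]]; right; eexists; split; eauto.

Lemma diamond : forall md e t t1, ys md e t t1 -> forall t2, ys md e t t2 ->
  t1 = t2 \/ exists s, ys md e t1 s /\ ys md e t2 s.
Proof.
  induction 1; intros t2 H2.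
  - inversion H2; subst.
    + left. eapply root_m_fun; eauto.
    + inversion H; subst. match goal with H1 : root_gcv _ _ |- _ => inversion H1 end.
    + inversion H.
    + right. eapply CP_m_app; eauto.
    + inversion H.
    + inversion H.
  - inversion H2; subst.
    + inversion H; subst. match goal with H1 : root_m _ _ |- _ => inversion H1 end.
    + left. eapply root_gcv_fun; eauto.
    + inversion H.
    + inversion H.
    + right. eapply CP_g_body; eauto.
    + right. eapply CP_g_arg; eauto.
  - inversion H2; subst;
      try (match goal with H1 : root_m _ _ |- _ => inversion H1 end);
      try (match goal with H1 : root_gcv _ _ |- _ => inversion H1 end).
    left; auto.
  - inversion H2; subst;
      try (match goal with H1 : root_gcv _ _ |- _ => inversion H1 end).
    + match goal with H1 : root_m _ _ |- _ =>
        destruct (CP_m_app md e a b _ a' H1 H) as [s [Hs1 Hs2]] end.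
      right. exists s. auto.
    + match goal with H1 : ys MN e a _ |- _ =>
        destruct (IHys _ H1) as [->|[s [Hs1 Hs2]]] end; [left; auto|].
      right. exists (App s b). split; apply y_app; auto.
  - inversion H2; subst;
      try (match goal with H1 : root_m _ _ |- _ => inversion H1 end).
    + match goal with H1 : root_gcv _ _ |- _ =>
        destruct (CP_g_body md e a b _ a' H1 H) as [s [Hs1 Hs2]] end.
      right. exists s. auto.
    + match goal with H1 : ys md (b :: e) a _ |- _ =>
        destruct (IHys _ H1) as [->|[s [Hs1 Hs2]]] end; [left; auto|].
      right. exists (ES s b). split; apply y_body; auto.
    + match goal with H1 : ys MA e b _, H3 : answer a |- _ =>
        destruct (CP_body_arg e a b a' _ H3 H H1) as [s [Hs1 Hs2]] end.
      right. exists s. auto.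
  - inversion H2; subst;
      try (match goal with H1 : root_m _ _ |- _ => inversion H1 end).
    + match goal with H1 : root_gcv _ _ |- _ =>
        destruct (CP_g_arg e a b _ b' H1 H H0) as [s [Hs1 Hs2]] end.
      right. exists s. auto.
    + match goal with H1 : ys MA (b :: e) a _ |- _ =>
        destruct (CP_body_arg e a b _ b' H H1 H0) as [s [Hs1 Hs2]] end.
      right. exists s. auto.
    + match goal with H1 : ys MA e b _ |- _ =>
        destruct (IHys _ H1) as [->|[s [Hs1 Hs2]]] end; [left; auto|].
      right. exists (ES a s). split; apply y_arg; auto.
Qed.

Lemma uniform : forall k u a, nsteps (ys MA []) k u a -> (forall x, ~ ys MA [] a x) ->
  forall s, ys MA [] u s -> exists k0, k = S k0 /\ nsteps (ys MA []) k0 s a.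
Proof.
  induction 1; intros Hnf s Hs.
  - exfalso. eapply Hnf; eauto.
  - destruct (diamond _ _ _ _ H _ Hs) as [->|[x [Hx1 Hx2]]].
    + exists n. auto.
    + destruct (IHnsteps Hnf x Hx1) as [n0 [-> Hn0]].
      exists (S n0). split; auto. econstructor; eauto.
Qed.

Lemma Mlem : forall a, strict_answer a -> forall k n t u, Cl t -> par [] t u n -> 1 <= n ->
  nsteps (ys MA []) k u a -> exists k', nsteps (ys MA []) k' t a /\ S k <= k'.
Proof.
  intros a Ha. assert (Hnf : forall x, ~ ys MA [] a x).
  { intros x Hx. eapply strict_ys; eauto. }
  induction k as [|k IHk]; intros n;
  induction n as [n IHn] using (well_founded_induction lt_wf);
  intros t u Ht Hp Hn Hk.
  all: destruct (progressA t []) as [Hs|[t1 Ht1]];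
    [intros i Hi; rewrite Ht in Hi; discriminate
    |apply (strict_par _ _ _ _ Hp) in Hs as [_ Hs]; lia|].
  all: destruct (Res _ _ _ _ Hp _ _ _ Ht1 er_nil) as [[L1 L2]|[s_ [m [R1 [R2 R3]]]]].
  - destruct (Nat.eq_dec (n - 1) 0) as [E|E].
    + rewrite E in L2. apply par_0_eq in L2. subst.
      exists 1. split; [econstructor; eauto|lia].
    + destruct (IHn (n - 1) ltac:(lia) t1 u (ys_closed _ _ _ Ht1 Ht) L2 ltac:(lia) Hk)
        as [k' [Hk1 Hk2]].
      exists (S k'). split; [econstructor; eauto|lia].
  - destruct (uniform _ _ _ Hk Hnf _ R1) as [k0 [E _]]. discriminate.
  - destruct (Nat.eq_dec (n - 1) 0) as [E|E].
    + rewrite E in L2. apply par_0_eq in L2. subst.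
      exists (S (S k)). split; [econstructor; eauto|lia].
    + destruct (IHn (n - 1) ltac:(lia) t1 u (ys_closed _ _ _ Ht1 Ht) L2 ltac:(lia) Hk)
        as [k' [Hk1 Hk2]].
      exists (S k'). split; [econstructor; eauto|lia].
  - destruct (uniform _ _ _ Hk Hnf _ R1) as [k0 [E Hk0]]. injection E as <-.
    destruct (IHk m t1 s_ (ys_closed _ _ _ Ht1 Ht) R2 ltac:(lia) Hk0) as [k' [Hk1 Hk2]].
    exists (S k'). split; [econstructor; eauto|lia].
Qed.

Lemma main_ys : forall a, strict_answer a -> forall h t, Cl t -> nsteps w_step h t a ->
  exists k, nsteps (ys MA []) k t a /\ h <= k.
Proof.
  intros a Ha h t Ht H. induction H.
  - exists 0. split; [constructor|lia].
  - pose proof (w_par _ _ H) as Hp.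
    destruct (IHnsteps Ha (par_closed _ _ _ Hp Ht)) as [k2 [Hk2 Hle]].
    destruct (Mlem _ Ha _ _ _ _ Ht Hp ltac:(lia) Hk2) as [k' [Hk' Hle']].
    exists k'. split; auto. lia.
Qed.

Lemma nsteps_sound : forall k t a, nsteps (ys MA []) k t a -> nsteps y_step k t a.
Proof. induction 1; econstructor; eauto. apply ys_sound; auto. Qed.

Theorem proposition12p7 :
  forall (t a_s : term) (h : nat),
    closed t -> strict_answer a_s -> nsteps w_step h t a_s ->
    exists k : nat, nsteps y_step k t a_s /\ h <= k.
Proof.
  intros t a h Hc Ha H.
  destruct (main_ys a Ha h t (closed_Cl _ Hc) H) as [k [Hk Hle]].
  exists k. split; auto. apply nsteps_sound. auto.
Qed.
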